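(* Let $m\ge 2$ be an integer and let $C=uRM(m)\subseteq \mathbb{F}_2^{2^m}$ be the classical binary linear code defined in the context (the code cut out by the weight-4 bulk checks and the boundary checks $S(w,t)$ on a $2^b\times 2^a$ grid). Then $C$ is equivalent, up to a permutation of coordinates, to the first-order Reed–Muller code $RM(1,m)$; in particular $C$ has parameters $[n,k,d]=[2^m,\,m+1,\,2^{m-1}]$.
   Context: Let $a=\lceil m/2\rceil$ and $b=\lfloor m/2\rfloor$, so $a+b=m$. Place $2^m$ bits on a rectangular grid with $2^b$ rows and $2^a$ columns; bits are indexed by grid positions $(i,j)$, $1\le i\le 2^b$, $1\le j\le 2^a$, with row $i=1$ the top row and column $j=1$ the leftmost column. A check is a subset of grid positions; a vector $x\in\mathbb{F}_2^{2^m}$ satisfies the check if the sum of $x$ over that subset is $0$ mod 2. Bulk checks: for every $1\le i<2^b$, $1\le j<2^a$, the 4-element set $\{(i,j),(i+1,j),(i,j+1),(i+1,j+1)\}$. Boundary checks: for a line of $L=2^n$ positions labelled $1,\dots,L$, and for each $s\in\{1,\dots,n-1\}$, $w=2^s$, and each integer $t$ with $-L/(2w)+1\le t\le L/(2w)-1$, define the 4-element set $S(w,t)=\{L/2-w/2+wt,\ L/2-w/2+wt+1,\ L/2+w/2+wt,\ L/2+w/2+wt+1\}$. The horizontal boundary checks are the sets $S(w,t)$ (with $n=a$) placed on the top row (position $j$ of the line being $(1,j)$); the vertical boundary checks are the sets $S(w,t)$ (with $n=b$) placed on the leftmost column (position $i$ of the line being $(i,1)$). $uRM(m)$ is the set of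 all $x\in\mathbb{F}_2^{2^m}$ satisfying all bulk and boundary checks. $RM(1,m)$ is the binary code of length $2^m$ consisting of the evaluation vectors $(c_0+c\cdot v)_{v\in\mathbb{F}_2^m}$ over all $c_0\in\mathbb{F}_2$, $c\in\mathbb{F}_2^m$. *)

(* Defs.v *)
From HB Require Import structures.
From mathcomp Require Import all_boot all_order all_algebra.
From mathcomp Require Import boolp.
Set Implicit Arguments. Unset Strict Implicit. Unset Printing Implicit Defensive.
Import Order.TTheory GRing.Theory Num.Theory.
Local Open Scope ring_scope.

(* a = ceil(m/2) (number of column bits), b = floor(m/2) (number of row bits) *)
Definition acol (m : nat) : nat := uphalf m.
Definition brow (m : nat) : nat := m./2.

(* Grid positions, 0-indexed: (i-1, j-1) for the paper's (i, j),
   with 2^b rows and 2^a columns. *)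
Definition Grid (m : nat) : finType :=
  ('I_(2 ^ brow m) * 'I_(2 ^ acol m))%type.

Definition gvec (m : nat) := {ffun Grid m -> 'F_2}.

Definition satisfies (T : finType) (x : {ffun T -> 'F_2}) (S : {set T}) : Prop :=
  \sum_(p in S) x p = 0.

Definition bulk_check (m : nat) (i j : nat) : {set Grid m} :=
  [set p : Grid m | ((p.1 : nat) == i) || ((p.1 : nat) == i.+1)
                  & ((p.2 : nat) == j) || ((p.2 : nat) == j.+1)].

(* The four (1-indexed, integer) line positions of S(w,t) on a line of length L. *)
Definition Sline (L w : nat) (t : int) : seq int :=
  [:: (L %/ 2)%:Z - (w %/ 2)%:Z + w%:Z * t;
      (L %/ 2)%:Z - (w %/ 2)%:Z + w%:Z * t + 1;
      (L %/ 2)%:Z + (w %/ 2)%:Z + w%:Z * t;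
      (L %/ 2)%:Z + (w %/ 2)%:Z + w%:Z * t + 1].

Definition t_range (L w : nat) (t : int) : Prop :=
  - ((L %/ (2 * w))%:Z) + 1 <= t /\ t <= (L %/ (2 * w))%:Z - 1.

Definition hcheck (m : nat) (w : nat) (t : int) : {set Grid m} :=
  [set p : Grid m | ((p.1 : nat) == 0%N)
                  & ((p.2 : nat).+1)%:Z \in Sline (2 ^ acol m) w t].

Definition vcheck (m : nat) (w : nat) (t : int) : {set Grid m} :=
  [set p : Grid m | ((p.2 : nat) == 0%N)
                  & ((p.1 : nat).+1)%:Z \in Sline (2 ^ brow m) w t].

Definition in_uRM (m : nat) (x : gvec m) : Prop :=
  [/\ (forall i j : nat, (i.+1 < 2 ^ brow m)%N -> (j.+1 < 2 ^ acol m)%N ->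
         satisfies x (bulk_check m i j)),
      (forall (s : nat) (t : int), (1 <= s)%N -> (s <= (acol m).-1)%N ->
         t_range (2 ^ acol m) (2 ^ s) t -> satisfies x (hcheck m (2 ^ s) t))
    & (forall (s : nat) (t : int), (1 <= s)%N -> (s <= (brow m).-1)%N ->
         t_range (2 ^ brow m) (2 ^ s) t -> satisfies x (vcheck m (2 ^ s) t))].

Definition uRM (m : nat) : {set gvec m} := [set x | `[< in_uRM x >]].

Definition RM1vec (m : nat) (c0 : 'F_2) (c : 'rV['F_2]_m) : {ffun 'rV['F_2]_m -> 'F_2} :=
  [ffun v : 'rV['F_2]_m => c0 + \sum_(k < m) c ord0 k * v ord0 k].

Definition in_RM1 (m : nat) (y : {ffun 'rV['F_2]_m -> 'F_2}) : Prop :=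
  exists c0 c, y = RM1vec c0 c.

Definition wt (T : finType) (x : {ffun T -> 'F_2}) : nat := #|[set p | x p != 0]|.

(* Main.v *)
Require Import Defs.
From HB Require Import structures.
From mathcomp Require Import all_boot all_order all_algebra.
From mathcomp Require Import boolp.
From mathcomp Require Import zify ring.
Set Implicit Arguments. Unset Strict Implicit. Unset Printing Implicit Defensive.
Import Order.TTheory GRing.Theory Num.Theory.
Local Open Scope ring_scope.

Lemma F2_cases (x : 'F_2) : x = 0 \/ x = 1.
Proof. case: x => [[|[|//]]] p; [left|right]; exact: val_inj. Qed.

Ltac f2solve := repeat match goal with |- forall x : _, _ =>
  let y := fresh "y" in move=> y; case: (F2_cases y) => -> end; apply/eqP.

Lemma F2xx (x : 'F_2) : x + x = 0.
Proof. by move: x; f2solve. Qed.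

Lemma F2opp (x : 'F_2) : - x = x.
Proof. by move: x; f2solve. Qed.

Lemma F2_eq (a b : 'F_2) : a + b = 0 -> a = b.
Proof. by move=> h; rewrite -[b]add0r -h -addrA F2xx addr0. Qed.

Lemma F2_nat (n : nat) : (n%:R : 'F_2) = (odd n)%:R.
Proof. apply: val_inj; rewrite /= !val_Fp_nat // modn2; by case: (odd n). Qed.

Lemma F2_bool_inj (b1 b2 : bool) : (b1%:R : 'F_2) = b2%:R -> b1 = b2.
Proof. by case: b1; case: b2 => // /eqP. Qed.

Definition beta (i l : nat) : 'F_2 := (i %/ 2 ^ l)%:R.
Definition gb (i l : nat) : 'F_2 := beta i l + beta i l.+1.
Definition dl (l p : nat) : 'F_2 := (2 ^ l %| p)%:R + (2 ^ l.+1 %| p)%:R.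

Lemma beta_step i l : beta i.+1 l = beta i l + (2 ^ l %| i.+1)%:R.
Proof. by rewrite /beta divnS ?expn_gt0 // natrD addrC. Qed.

Lemma gb_step i l : gb i.+1 l = gb i l + dl l i.+1.
Proof. rewrite /gb /dl !beta_step. by move: (beta i l) (beta i l.+1) ((2 ^ l %| i.+1)%:R : 'F_2) ((2 ^ l.+1 %| i.+1)%:R : 'F_2); f2solve. Qed.

Lemma gb0 l : gb 0 l = 0.
Proof. by rewrite /gb /beta !div0n addr0. Qed.

Lemma dvd_oddmul v e l : (2 ^ l %| (2 * v + 1) * 2 ^ e)%N = (l <= e)%N.
Proof.
case: (leqP l e) => h.
  by apply: dvdn_mull; apply: dvdn_exp2l.
apply/negbTE/negP => H.
have : (2 ^ e.+1 %| (2 * v + 1) * 2 ^ e)%N by apply: dvdn_trans H; apply: dvdn_exp2l.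
by rewrite expnS dvdn_pmul2r ?expn_gt0 // dvdn_addr ?dvdn_mulr.
Qed.

Lemma dl_oddmul v e l : dl l ((2 * v + 1) * 2 ^ e) = (l == e)%:R.
Proof.
rewrite /dl !dvd_oddmul; case: (ltngtP l e) => h //=.
- by rewrite F2xx.
- by rewrite addr0.
- by subst; rewrite ?leqnn ?ltnn ?eqxx ?addr0.
Qed.

Lemma oddpart p : (0 < p)%N -> exists e v, p = ((2 * v + 1) * 2 ^ e)%N.
Proof.
elim: p {-2}p (leqnn p) => [|n IH] p hp p0; first by lia.
case odd_p: (odd p).
  exists 0%N, p./2; rewrite expn0 muln1 -[p in LHS]odd_double_half odd_p -muln2; lia.
have e1 : p = (p./2 * 2)%N by rewrite -[p in LHS]odd_double_half odd_p -muln2.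
have [||e [v hv]] := IH p./2; [lia|lia|].
exists e.+1, v; rewrite -[p]odd_double_half odd_p hv expnS -muln2 /=; ring.
Qed.


Ltac f2imp := repeat match goal with |- forall x : _, _ =>
  let y := fresh "y" in move=> y; case: (F2_cases y) => -> end;
  let H := fresh "H" in intro H; apply/eqP; move/eqP: H; done.

Definition q_of (s u : nat) : nat := ((2 * u + 1) * 2 ^ s.-1)%N.
Definition line4 (f : nat -> 'F_2) (s u : nat) : 'F_2 :=
  f (q_of s u).-1 + f (q_of s u) + f (q_of s u + 2 ^ s)%N.-1 + f (q_of s u + 2 ^ s)%N.
Definition linecond (n : nat) (f : nat -> 'F_2) : Prop :=
  forall s u, (0 < s)%N -> (s < n)%N -> (u.+2 <= 2 ^ (n - s))%N -> line4 f s u = 0.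

Lemma q_next s u : (0 < s)%N -> (q_of s u + 2 ^ s)%N = q_of s u.+1.
Proof. by case: s => // s _; rewrite /q_of /= expnS; ring. Qed.

Lemma q_range n s u : (0 < s)%N -> (s < n)%N -> (u.+2 <= 2 ^ (n - s))%N ->
  (0 < q_of s u)%N /\ (q_of s u + 2 ^ s < 2 ^ n)%N.
Proof.
case: s => // s _ hsn hu; rewrite /q_of /=.
have [k ek] : exists k, n = (s.+1 + k)%N by exists (n - s.+1)%N; lia.
rewrite ek addKn in hu; rewrite ek.
rewrite expnD !expnS; have hp := expn_gt0 2 s; have hk := expn_gt0 2 k.
move: (2 ^ s)%N (2 ^ k)%N hp hk hu => P K hp hk hu; split; nia.
Qed.

Lemma sum_gb_step (c : nat -> 'F_2) n k :
  \sum_(l < n) c l * gb k.+1 l = \sum_(l < n) c l * gb k l + \sum_(l < n) c l * dl l k.+1.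
Proof. by rewrite -big_split; apply: eq_bigr => l _; rewrite gb_step mulrDr. Qed.

Lemma line_fwd n c0 (c : nat -> 'F_2) f :
  (forall k, (k < 2 ^ n)%N -> f k = c0 + \sum_(l < n) c l * gb k l) -> linecond n f.
Proof.
move=> hf s u s0 sn hu; have [q0 qn] := q_range s0 sn hu.
have ds : forall l, dl l (q_of s u.+1) = dl l (q_of s u) by move=> l; rewrite /q_of !dl_oddmul.
rewrite /line4 (q_next _ s0) in qn *.
have q1 : (0 < q_of s u.+1)%N by rewrite /q_of muln_gt0 expn_gt0 addn1.
have q2 : (q_of s u < q_of s u.+1)%N by rewrite /q_of ltn_pmul2r ?expn_gt0 //; lia.
move: (q_of s u) (q_of s u.+1) q0 q1 q2 qn ds => [|Q] [|R] // _ _ q2 qn ds /=.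
rewrite !hf; try lia.
rewrite !sum_gb_step.
have -> : \sum_(l < n) c l * dl l R.+1 = \sum_(l < n) c l * dl l Q.+1.
  by apply: eq_bigr => l _; rewrite ds.
clear hf; move: c0 (\sum_(l < n) c l * gb Q l) (\sum_(l < n) c l * dl l Q.+1)
   (\sum_(l < n) c l * gb R l).
by f2solve.
Qed.

Lemma pair_diff n f : linecond n f -> forall e v, ((2 * v + 1) * 2 ^ e < 2 ^ n)%N ->
  f ((2 * v + 1) * 2 ^ e)%N.-1 + f ((2 * v + 1) * 2 ^ e)%N = f (2 ^ e)%N.-1 + f (2 ^ e)%N.
Proof.
move=> hl e; elim=> [|v IH] hv; first by rewrite muln0 add0n mul1n.
have en : (e < n)%N.
  rewrite ltnNge; apply/negP => h.
  have : (2 ^ n <= 2 ^ e)%N by rewrite leq_exp2l.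
  have : (2 ^ e <= (2 * v.+1 + 1) * 2 ^ e)%N by rewrite leq_pmull ?addn1.
  lia.
have [k ek] : exists k, n = (e + k.+1)%N.
  exists (n - e.+1)%N; lia.
have hv' : ((2 * v + 1) * 2 ^ e < 2 ^ n)%N.
  apply: leq_ltn_trans hv; rewrite leq_pmul2r ?expn_gt0 //; lia.
have := hl e.+1 v isT.
have ek' : (n - e.+1 = k)%N by lia.
rewrite ek' /line4 /q_of /= -IH //.
have -> : ((2 * v + 1) * 2 ^ e + 2 ^ e.+1)%N = ((2 * v.+1 + 1) * 2 ^ e)%N.
  rewrite expnS; ring.
have hK : (v.+1 < 2 ^ k)%N.
  move: hv; rewrite ek expnD expnS => hv.
  have hp := expn_gt0 2 e.
  move: (2 ^ e)%N (2 ^ k)%N hp hv => P K hp hv; nia.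
have k0 : (0 < k)%N by case: k {ek ek'} hK => //; rewrite expn0.
move=> H; rewrite -addrA in H; apply/esym/F2_eq; apply: H => //.
by rewrite ek; lia.
Qed.

Lemma sum_pick n (d : nat -> 'F_2) e : (e < n)%N ->
  \sum_(l < n) d l * (l == e :> nat)%:R = d e.
Proof.
move=> en; rewrite (bigD1 (Ordinal en)) //= eqxx mulr1 big1 ?addr0 // => l hl.
rewrite (_ : (l == e :> nat) = false) ?mulr0 //; apply/negbTE; apply: contra hl => /eqP h.
by apply/eqP; apply: val_inj.
Qed.

Lemma line_bwd n f : linecond n f -> forall j, (j < 2 ^ n)%N ->
  f j = f 0%N + \sum_(l < n) (f (2 ^ l)%N.-1 + f (2 ^ l)%N) * gb j l.
Proof.
move=> hl; elim=> [|j IH] hj.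
  by rewrite big1 ?addr0 // => l _; rewrite gb0 mulr0.
have [e [v ev]] := oddpart (ltn0Sn j).
have en : (e < n)%N.
  rewrite ltnNge; apply/negP => h.
  have : (2 ^ n <= 2 ^ e)%N by rewrite leq_exp2l.
  have : (2 ^ e <= (2 * v + 1) * 2 ^ e)%N by rewrite leq_pmull ?addn1.
  lia.
rewrite (sum_gb_step (fun l => f (2 ^ l)%N.-1 + f (2 ^ l)%N)).
have -> : \sum_(l < n) (f (2 ^ l)%N.-1 + f (2 ^ l)%N) * dl l j.+1 = f (2 ^ e)%N.-1 + f (2 ^ e)%N.
  rewrite ev; under eq_bigr do rewrite dl_oddmul.
  exact: (sum_pick (fun l => f (2 ^ l)%N.-1 + f (2 ^ l)%N)).
rewrite addrA -IH; last by lia.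
have H : forall p, p = ((2 * v + 1) * 2 ^ e)%N -> f p.-1 + f p = f (2 ^ e)%N.-1 + f (2 ^ e)%N.
  by move=> p ->; apply: (pair_diff hl); rewrite -ev.
rewrite -(H _ ev) /=.
by move: (f j) (f j.+1); f2solve.
Qed.

Definition bulkcond (A B : nat) (X : nat -> nat -> 'F_2) : Prop :=
  forall i j, (i.+1 < A)%N -> (j.+1 < B)%N -> X i j + X i j.+1 + X i.+1 j + X i.+1 j.+1 = 0.

Lemma bulk_fwd A B X (al be : nat -> 'F_2) :
  (forall i j, (i < A)%N -> (j < B)%N -> X i j = al i + be j) -> bulkcond A B X.
Proof.
move=> hX i j hi hj; rewrite !hX //; try lia.
by move: (al i) (al i.+1) (be j) (be j.+1); f2solve.
Qed.

Lemma bulk_bwd A B X : bulkcond A B X ->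
  forall i j, (i < A)%N -> (j < B)%N -> X i j = X i 0%N + X 0%N j + X 0%N 0%N.
Proof.
move=> hb; elim=> [|i IHi] j hi hj.
  by move: (X 0%N j) (X 0%N 0%N); f2solve.
elim: j hj => [|j IHj] hj.
  by move: (X i.+1 0%N) (X 0%N 0%N); f2solve.
have h1 := hb i j hi hj.
have h2 := IHi j.+1 (ltnW hi) hj.
have h3 := IHj (ltnW hj).
have h4 := IHi j (ltnW hi) (ltnW hj).
move: h1; rewrite h2 h3 h4.
move: (X i.+1 j.+1) (X i 0%N) (X i.+1 0%N) (X 0%N j) (X 0%N j.+1) (X 0%N 0%N).
f2imp.
Qed.

Lemma bits_inj n i i' : (i < 2 ^ n)%N -> (i' < 2 ^ n)%N ->
  (forall k, (k < n)%N -> odd (i %/ 2 ^ k) = odd (i' %/ 2 ^ k)) -> i = i'.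
Proof.
elim: n i i' => [|n IH] i i' hi hi' h; first by rewrite expn0 in hi hi'; lia.
have h0 := h 0%N isT; rewrite expn0 !divn1 in h0.
have e1 : i./2 = i'./2.
  apply: IH.
  - by rewrite -divn2 ltn_divLR // -expnSr.
  - by rewrite -divn2 ltn_divLR // -expnSr.
  move=> k hk; have := h k.+1 hk; by rewrite expnS !divnMA !divn2.
by rewrite -[i]odd_double_half -[i']odd_double_half h0 e1.
Qed.

Lemma beta_tele i n k : (k <= n)%N ->
  beta i k = \sum_(k <= l < n) gb i l + beta i n.
Proof.
move=> kn; rewrite (telescope_sumr_eq (beta i)) //; last first.
  by move=> l _; rewrite /gb F2opp addrC.
by rewrite F2opp addrAC F2xx add0r.
Qed.

Lemma gray_inj n i i' : (i < 2 ^ n)%N -> (i' < 2 ^ n)%N ->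
  (forall l, (l < n)%N -> gb i l = gb i' l) -> i = i'.
Proof.
move=> hi hi' h; apply: (bits_inj hi hi') => k kn.
apply: F2_bool_inj; rewrite -!F2_nat.
have := beta_tele i (ltnW kn); have := beta_tele i' (ltnW kn).
rewrite /beta (divn_small hi) (divn_small hi') => -> ->; congr (_ + _).
by apply: eq_big_nat => l /andP [_ ln]; rewrite h.
Qed.

Definition getx m (x : gvec m) (i j : nat) : 'F_2 :=
  if (insub i : option 'I_(2 ^ brow m)) is Some i' then
    if (insub j : option 'I_(2 ^ acol m)) is Some j' then x (i', j') else 0
  else 0.

Lemma getxE m (x : gvec m) (i : 'I_(2 ^ brow m)) (j : 'I_(2 ^ acol m)) :
  getx x i j = x (i, j).
Proof. by rewrite /getx !valK. Qed.

Lemma sum_ord_seq N (F : nat -> 'F_2) (s : seq nat) : uniq s -> all (fun k => k < N)%N s ->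
  \sum_(i < N | (i : nat) \in s) F i = \sum_(k <- s) F k.
Proof.
move=> us als; rewrite -big_mkord -big_filter; apply: perm_big; apply: uniq_perm.
- by rewrite filter_uniq // iota_uniq.
- by [].
move=> k; rewrite mem_filter mem_iota add0n subn0 /=.
apply/idP/idP => [/andP[]//|ks]; apply/andP; split => //.
by move/allP: als => /(_ k ks).
Qed.

Lemma sum_grid m (x : gvec m) (sA sB : seq nat) : uniq sA -> uniq sB ->
  all (fun k => k < 2 ^ brow m)%N sA -> all (fun k => k < 2 ^ acol m)%N sB ->
  \sum_(p in [set p : Grid m | ((p.1 : nat) \in sA) & ((p.2 : nat) \in sB)]) x p
  = \sum_(i <- sA) \sum_(j <- sB) getx x i j.
Proof.
move=> uA uB aA aB.
transitivity (\sum_(p : 'I_(2 ^ brow m) * 'I_(2 ^ acol m) | ((p.1 : nat) \in sA) && ((p.2 : nat) \in sB)) x (p.1, p.2)).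
  by apply: eq_big => [p|[i j] _]; rewrite ?inE.
rewrite -(pair_big (fun i : 'I_(2 ^ brow m) => (i : nat) \in sA) (fun j : 'I_(2 ^ acol m) => (j : nat) \in sB) (fun i j => x (i, j))) /=.
rewrite -(@sum_ord_seq (2 ^ brow m) (fun i => \sum_(j <- sB) getx x i j)) //.
apply: eq_bigr => i _; rewrite -(@sum_ord_seq (2 ^ acol m) (getx x i)) //.
by apply: eq_bigr => j _; rewrite getxE.
Qed.

Definition s4 (s u : nat) : seq nat :=
  [:: (q_of s u).-1; q_of s u; (q_of s u + 2 ^ s)%N.-1; (q_of s u + 2 ^ s)%N].

Lemma Sline_eq n s u : (0 < s)%N -> (s < n)%N ->
  Sline (2 ^ n) (2 ^ s) ((u.+1)%:Z - (2 ^ (n - s.+1))%:Z) = map (fun k => (k.+1)%:Z) (s4 s u).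
Proof.
case: s => // e _ hn.
have [k ->] : exists k, n = (e.+1 + k.+1)%N by exists (n - e.+2)%N; lia.
have -> : (e.+1 + k.+1 - e.+2 = k)%N by lia.
rewrite /Sline /s4 /q_of /= expnD !expnS.
have hP : (0 < 2 ^ e)%N by rewrite expn_gt0.
have hK : (0 < 2 ^ k)%N by rewrite expn_gt0.
move: (2 ^ e)%N (2 ^ k)%N hP hK => P K hP hK.
have -> : ((2 * P * (2 * K)) %/ 2 = 2 * P * K)%N.
  by rewrite (_ : (2 * P * (2 * K) = (2 * P * K) * 2)%N) ?mulnK //; ring.
have -> : ((2 * P) %/ 2 = P)%N by rewrite mulKn.
have q0 : (0 < (2 * u + 1) * P)%N by rewrite muln_gt0 addn1.
rewrite !prednK //; last by lia.
congr [:: _; _; _; _]; lia.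
Qed.

Lemma t_range_u n s t : (0 < s)%N -> (s < n)%N ->
  t_range (2 ^ n) (2 ^ s) t <->
  exists2 u, t = (u.+1)%:Z - (2 ^ (n - s.+1))%:Z & (u.+2 <= 2 ^ (n - s))%N.
Proof.
move=> s0 sn.
have e1 : (2 ^ n %/ (2 * 2 ^ s) = 2 ^ (n - s.+1))%N.
  have [k ->] : exists k, n = (s.+1 + k)%N by exists (n - s.+1)%N; lia.
  by rewrite addKn -expnS expnD mulKn // expn_gt0.
have e2 : (2 ^ (n - s) = 2 * 2 ^ (n - s.+1))%N by rewrite -expnS; congr (expn 2 _); lia.
rewrite /t_range e1 e2; move: (2 ^ (n - s.+1))%N => K.
split.
  move=> [h1 h2]; exists (absz (t + K%:Z - 1)%R); lia.
move=> [u -> hu]; lia.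
Qed.

Lemma s4_ok n s u : (0 < s)%N -> (s < n)%N -> (u.+2 <= 2 ^ (n - s))%N ->
  uniq (s4 s u) && all (fun k => k < 2 ^ n)%N (s4 s u).
Proof.
move=> s0 sn hu; have [q0 qn] := q_range s0 sn hu.
have w2 : (2 <= 2 ^ s)%N by rewrite -{1}(expn1 2) leq_exp2l.
rewrite /s4 /= !inE; lia.
Qed.

Lemma bulk_sum m (x : gvec m) i j : (i.+1 < 2 ^ brow m)%N -> (j.+1 < 2 ^ acol m)%N ->
  \sum_(p in bulk_check m i j) x p =
  getx x i j + getx x i j.+1 + getx x i.+1 j + getx x i.+1 j.+1.
Proof.
move=> hi hj.
have -> : bulk_check m i j = [set p : Grid m | ((p.1 : nat) \in [:: i; i.+1]) & ((p.2 : nat) \in [:: j; j.+1])].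
  by apply/setP => p; rewrite !inE.
rewrite sum_grid /=; try (rewrite /= ?inE; lia).
by rewrite !big_cons !big_nil !addr0 !addrA.
Qed.

Lemma Sinj : injective (fun k : nat => (k.+1)%:Z).
Proof. by move=> k1 k2 [->]. Qed.

Lemma h_sum m (x : gvec m) s u : (0 < s)%N -> (s < acol m)%N -> (u.+2 <= 2 ^ (acol m - s))%N ->
  \sum_(p in hcheck m (2 ^ s)%N ((u.+1)%:Z - (2 ^ (acol m - s.+1))%N%:Z)) x p = line4 (getx x 0%N) s u.
Proof.
move=> s0 sa hu; have /andP [u4 a4] := s4_ok s0 sa hu.
have -> : hcheck m (2 ^ s)%N ((u.+1)%:Z - (2 ^ (acol m - s.+1))%N%:Z) =
   [set p : Grid m | ((p.1 : nat) \in [:: 0%N]) & ((p.2 : nat) \in s4 s u)].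
  by rewrite /hcheck Sline_eq //; apply/setP => p; rewrite !in_set (mem_map Sinj) mem_seq1.
rewrite sum_grid //=; last by rewrite expn_gt0.
by rewrite !big_cons !big_nil !addr0 !addrA.
Qed.

Lemma v_sum m (x : gvec m) s u : (0 < s)%N -> (s < brow m)%N -> (u.+2 <= 2 ^ (brow m - s))%N ->
  \sum_(p in vcheck m (2 ^ s)%N ((u.+1)%:Z - (2 ^ (brow m - s.+1))%N%:Z)) x p = line4 (fun i => getx x i 0%N) s u.
Proof.
move=> s0 sa hu; have /andP [u4 a4] := s4_ok s0 sa hu.
have -> : vcheck m (2 ^ s)%N ((u.+1)%:Z - (2 ^ (brow m - s.+1))%N%:Z) =
   [set p : Grid m | ((p.1 : nat) \in s4 s u) & ((p.2 : nat) \in [:: 0%N])].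
  by rewrite /vcheck Sline_eq //; apply/setP => p; rewrite !in_set (mem_map Sinj) mem_seq1 andbC.
rewrite sum_grid //=; last by rewrite expn_gt0.
by rewrite !big_cons !big_nil !addr0 !addrA.
Qed.

Lemma in_uRM_iff m (x : gvec m) : in_uRM x <->
  [/\ bulkcond (2 ^ brow m) (2 ^ acol m) (getx x), linecond (acol m) (getx x 0%N)
    & linecond (brow m) (fun i => getx x i 0%N)].
Proof.
split.
  case=> hB hH hV; split.
  - by move=> i j hi hj; rewrite -bulk_sum //; apply: hB.
  - move=> s u s0 sa hu; rewrite -h_sum //; apply: hH => //; first lia.
    by apply/t_range_u => //; exists u.
  - move=> s u s0 sa hu; rewrite -v_sum //; apply: hV => //; first lia.
    by apply/t_range_u => //; exists u.
case=> hB hH hV; split.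
- by move=> i j hi hj; rewrite /satisfies bulk_sum //; apply: hB.
- move=> s t s0 sa ht; have sa' : (s < acol m)%N by lia.
  have [u -> hu] := (t_range_u t s0 sa').1 ht.
  by rewrite /satisfies h_sum //; apply: hH.
- move=> s t s0 sa ht; have sa' : (s < brow m)%N by lia.
  have [u -> hu] := (t_range_u t s0 sa').1 ht.
  by rewrite /satisfies v_sum //; apply: hV.
Qed.

Lemma ffun0E (T : finType) (p : T) : (0 : {ffun T -> 'F_2}) p = 0.
Proof. by rewrite ffunE. Qed.

Definition G m (i j k : nat) : 'F_2 := if (k < brow m)%N then gb i k else gb j (k - brow m).
Definition sigma m (p : Grid m) : 'rV['F_2]_m := \row_(k < m) G m p.1 p.2 k.
Definition cn m (c : 'rV['F_2]_m) (k : nat) : 'F_2 :=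
  if (insub k : option 'I_m) is Some k' then c ord0 k' else 0.

Lemma brow_acol m : (brow m + acol m)%N = m.
Proof. by rewrite /brow /acol uphalf_half addnCA addnn odd_double_half. Qed.

Lemma sum_split m (F : nat -> 'F_2) :
  \sum_(k < m) F k = \sum_(l < brow m) F l + \sum_(l < acol m) F (brow m + l)%N.
Proof.
rewrite -(big_mkord xpredT F) -(big_mkord xpredT F) -(big_mkord xpredT (fun l => F (brow m + l)%N)).
rewrite -[in LHS](brow_acol m) (big_cat_nat (n := brow m)) //=; last exact: leq_addr.
congr (_ + _); rewrite -{1}(add0n (brow m)) big_addn addKn.
by apply: eq_bigr => l _; rewrite addnC.
Qed.

Lemma RMval m (c : 'rV['F_2]_m) (p : Grid m) :
  \sum_(k < m) c ord0 k * sigma p ord0 k =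
  \sum_(l < brow m) cn c l * gb p.1 l + \sum_(l < acol m) cn c (brow m + l)%N * gb p.2 l.
Proof.
transitivity (\sum_(k < m) (cn c k * G m p.1 p.2 k)).
  by apply: eq_bigr => k _; rewrite mxE /cn valK.
rewrite (@sum_split m (fun k => cn c k * G m p.1 p.2 k)); congr (_ + _); apply: eq_bigr => l _; rewrite /G.
  by rewrite ltn_ord.
by rewrite ltnNge leq_addr /= addKn.
Qed.

Lemma cn_ord m (c : 'rV['F_2]_m) k (hk : (k < m)%N) : cn c k = c ord0 (Ordinal hk).
Proof. by rewrite /cn insubT. Qed.

Lemma sigma_inj m : injective (@sigma m).
Proof.
move=> [i j] [i' j'] /rowP H.
have hb : forall l, (l < brow m)%N -> gb i l = gb i' l.
  move=> l hl; have lm : (l < m)%N by rewrite -(brow_acol m); apply: leq_trans hl (leq_addr _ _).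
  by have := H (Ordinal lm); rewrite !mxE /G /= hl.
have ha : forall l, (l < acol m)%N -> gb j l = gb j' l.
  move=> l hl; have lm : (brow m + l < m)%N by rewrite -{2}(brow_acol m) ltn_add2l.
  by have := H (Ordinal lm); rewrite !mxE /G /= ltnNge leq_addr /= addKn.
congr pair; apply: val_inj.
  by apply: (@gray_inj (brow m)); rewrite ?ltn_ord.
by apply: (@gray_inj (acol m)); rewrite ?ltn_ord.
Qed.

Lemma sigma_bij m : bijective (@sigma m).
Proof.
apply: (@inj_card_bij (Grid m) _ (@sigma m) (@sigma_inj m)).
by rewrite card_mx card_Fp // card_prod !card_ord -expnD brow_acol mul1n.
Qed.

Lemma getx_phi m (y : {ffun 'rV['F_2]_m -> 'F_2}) i j
  (hi : (i < 2 ^ brow m)%N) (hj : (j < 2 ^ acol m)%N) :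
  getx [ffun p => y (sigma p)] i j = y (sigma (Ordinal hi, Ordinal hj)).
Proof. by rewrite (getxE _ (Ordinal hi) (Ordinal hj)) ffunE. Qed.

Lemma RM_to_uRM m (c0 : 'F_2) (c : 'rV['F_2]_m) : in_uRM [ffun p => RM1vec c0 c (sigma p)].
Proof.
apply/in_uRM_iff.
set Al := fun i => \sum_(l < brow m) cn c l * gb i l.
set Be := fun j => \sum_(l < acol m) cn c (brow m + l)%N * gb j l.
have hX : forall i j, (i < 2 ^ brow m)%N -> (j < 2 ^ acol m)%N ->
    getx [ffun p => RM1vec c0 c (sigma p)] i j = c0 + Al i + Be j.
  by move=> i j hi hj; rewrite getx_phi ffunE RMval /= addrA.
have p0 : forall n, (0 < 2 ^ n)%N by move=> n; rewrite expn_gt0.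
split.
- by apply: (bulk_fwd (al := fun i => c0 + Al i) (be := Be)) => i j hi hj; apply: hX.
- by apply: (line_fwd (c0 := c0 + Al 0%N) (c := fun l => cn c (brow m + l)%N)) => k hk; rewrite hX.
- apply: (line_fwd (c0 := c0 + Be 0%N) (c := cn c)) => k hk; rewrite hX //.
  by rewrite addrAC.
Qed.

Lemma F2_rearr (a A B : 'F_2) : (a + A) + (a + B) + a = a + A + B.
Proof. by move: a A B; f2solve. Qed.

Lemma uRM_to_RM m (y : {ffun 'rV['F_2]_m -> 'F_2}) :
  in_uRM [ffun p => y (sigma p)] -> in_RM1 y.
Proof.
move/in_uRM_iff => [hB hH hV].
set X := getx [ffun p => y (sigma p)] in hB hH hV.
have hbulk := bulk_bwd hB.
have hrow := line_bwd hV.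
have hcol := line_bwd hH.
exists (X 0%N 0%N), (\row_(k < m) (if (k < brow m)%N then X (2 ^ k)%N.-1 0%N + X (2 ^ k)%N 0%N
          else X 0%N (2 ^ (k - brow m))%N.-1 + X 0%N (2 ^ (k - brow m))%N)).
apply/ffunP => v; have [g sg gs] := sigma_bij m.
rewrite -(gs v); case: (g v) => i j.
rewrite !ffunE RMval /=.
have -> : y (sigma (i, j)) = X i j by rewrite /X getxE ffunE.
rewrite hbulk ?ltn_ord // [X i 0%N](hrow i (ltn_ord i)) [X 0%N j](hcol j (ltn_ord j)) /=.
have hm : forall l, (l < brow m)%N -> (l < m)%N.
  by move=> l hl; rewrite -(brow_acol m); apply: leq_trans hl (leq_addr _ _).
have hm' : forall l, (l < acol m)%N -> (brow m + l < m)%N.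
  by move=> l hl; rewrite -{2}(brow_acol m) ltn_add2l.
rewrite F2_rearr [RHS]addrA; congr (_ + _ + _); apply: eq_bigr => l _.
  by rewrite (cn_ord _ (hm l (ltn_ord l))) mxE /= ltn_ord.
by rewrite (cn_ord _ (hm' l (ltn_ord l))) mxE /= ltnNge leq_addr /= addKn.
Qed.

Lemma inuRM m (x : gvec m) : (x \in uRM m) <-> in_uRM x.
Proof. by rewrite inE; split => /asboolP. Qed.

Lemma sum_delta m (c : 'rV['F_2]_m) k :
  \sum_(k' < m) c ord0 k' * (@delta_mx 'F_2 1 m ord0 k) ord0 k' = c ord0 k.
Proof.
rewrite (bigD1 k) //= mxE !eqxx mulr1 big1 ?addr0 // => k' hk'.
by rewrite mxE eqxx /= (negbTE hk') mulr0.
Qed.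

Lemma RM1_inj m : injective (fun pc : 'F_2 * 'rV['F_2]_m => RM1vec pc.1 pc.2).
Proof.
move=> [c0 c] [c0' c'] /= /ffunP H.
have h0 : c0 = c0'.
  have := H (const_mx 0); rewrite !ffunE !big1 ?addr0 // => k _; by rewrite mxE mulr0.
subst c0'; congr pair; apply/rowP => k.
by have := H (@delta_mx 'F_2 1 m ord0 k); rewrite !ffunE !sum_delta => /addrI.
Qed.

Lemma wt_phi m (y : {ffun 'rV['F_2]_m -> 'F_2}) : wt [ffun p => y (sigma p)] = wt y.
Proof.
have [g sg gs] := sigma_bij m.
rewrite /wt -(card_imset _ (@sigma_inj m)); apply: eq_card => v.
rewrite [in RHS]inE; apply/imsetP/idP.
  by move=> [p]; rewrite inE ffunE => hp ->.
by move=> hv; exists (g v); [rewrite inE ffunE gs | rewrite gs].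
Qed.

Lemma F2_neq0 (x : 'F_2) : (x != 0) = (x == 1).
Proof. by case: (F2_cases x) => ->. Qed.

Lemma wt_RM1 m c0 (c : 'rV['F_2]_m) : c != 0 -> wt (RM1vec c0 c) = (2 ^ m.-1)%N.
Proof.
move=> hc.
have [k hk] : exists k, c ord0 k != 0.
  case: (pickP (fun k => c ord0 k != 0)) => [k hk|h0]; first by exists k.
  case/eqP: hc; apply/rowP => k; rewrite mxE; have := h0 k; by move/negbFE/eqP.
have ck : c ord0 k = 1 by apply/eqP; rewrite -F2_neq0.
set y := RM1vec c0 c; set e := @delta_mx 'F_2 1 m ord0 k.
have ee : e + e = 0 by apply/rowP => k'; rewrite !mxE F2xx.
have ht : forall v, y (v + e) = y v + 1.
  move=> v; rewrite !ffunE -addrA; congr (_ + _).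
  rewrite -ck -sum_delta -big_split; apply: eq_bigr => k' _; by rewrite mxE mulrDr.
set O := [set v | y v != 0].
have hO : [set v + e | v in ~: O] = O.
  apply/setP => v; rewrite [in RHS]inE; apply/imsetP/idP.
    by move=> [w]; rewrite !inE negbK => /eqP hw ->; rewrite ht hw add0r.
  move=> hv; exists (v + e); last by rewrite -addrA ee addr0.
  by rewrite !inE ht; move: hv; case: (F2_cases (y v)) => ->.
have c1 : #|O| = #|~: O| by rewrite -{1}hO card_imset //; exact: addIr.
have c2 := cardsC O; rewrite card_mx card_Fp // mul1n -c1 in c2.
have m0 : (0 < m)%N by apply: (leq_ltn_trans (leq0n k) (ltn_ord k)).
have e2 : (2 ^ m = 2 * 2 ^ m.-1)%N by rewrite -expnS prednK.
rewrite /wt -/O; lia.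
Qed.

Lemma RMc0 m (c0 : 'F_2) : wt (RM1vec c0 (0 : 'rV['F_2]_m)) = if c0 == 0 then 0%N else (2 ^ m)%N.
Proof.
have hv : forall v : 'rV['F_2]_m, RM1vec c0 0 v = c0.
  by move=> v; rewrite ffunE big1 ?addr0 // => k _; rewrite mxE mul0r.
rewrite /wt; case: (c0 =P 0) => [e0|/eqP h].
  by apply/eqP; rewrite cards_eq0; apply/eqP/setP => v; rewrite !inE hv e0 eqxx.
rewrite (_ : [set p | _] = setT) ?cardsT ?card_mx ?card_Fp ?mul1n //.
by apply/setP => v; rewrite !inE hv h.
Qed.

Unset Implicit Arguments.

Theorem theorem1 (m : nat) : (2 <= m)%N ->
  (exists sigma : Grid m -> 'rV['F_2]_m, bijective sigma /\
     forall y : {ffun 'rV['F_2]_m -> 'F_2},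
       in_RM1 y <-> in_uRM [ffun p : Grid m => y (sigma p)]) /\
  [/\ #|Grid m| = (2 ^ m)%N,
      #|uRM m| = (2 ^ m.+1)%N,
      (exists2 x : gvec m, x \in uRM m & x != 0 /\ wt x = (2 ^ m.-1)%N)
    & (forall x : gvec m, x \in uRM m -> x != 0 -> (2 ^ m.-1 <= wt x)%N)].
Proof.
move=> m2.
have [g sg gs] := sigma_bij m.
set Phi := fun y : {ffun 'rV['F_2]_m -> 'F_2} => [ffun p : Grid m => y (sigma p)].
set Psi := fun x : gvec m => [ffun v => x (g v)].
have PP : forall x, Phi (Psi x) = x by move=> x; apply/ffunP => p; rewrite !ffunE sg.
have iff1 : forall y, in_RM1 y <-> in_uRM (Phi y).
  move=> y; split; last exact: uRM_to_RM.
  by case=> c0 [c ->]; apply: RM_to_uRM.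
have m0 : (0 < m)%N by lia.
split.
  by exists (@sigma m); split; [exact: sigma_bij | exact: iff1].
split.
- by rewrite card_prod !card_ord -expnD brow_acol.
- have -> : uRM m = [set Phi (RM1vec pc.1 pc.2) | pc in [set: 'F_2 * 'rV['F_2]_m]].
    apply/setP => x; apply/idP/imsetP.
      move/inuRM; rewrite -{1}(PP x) => /iff1 [c0 [c hc]].
      by exists (c0, c); rewrite // -hc PP.
    by move=> [pc _ ->]; apply/inuRM; apply: RM_to_uRM.
  rewrite card_imset; last first.
    move=> p1 p2 /= h; apply: RM1_inj.
    by apply/ffunP => v; have := congr1 (fun x : gvec m => x (g v)) h; rewrite /Phi !ffunE gs.
  by rewrite cardsT card_prod card_mx card_Fp // mul1n expnS.
- set k0 : 'I_m := Ordinal m0.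
  set d := @delta_mx 'F_2 1 m ord0 k0.
  have dn : d != 0.
    apply/eqP => h; have := congr1 (fun M : 'rV['F_2]_m => M ord0 k0) h.
    by rewrite /d !mxE !eqxx.
  have w := wt_RM1 0 dn.
  exists (Phi (RM1vec 0 d)); first by apply/inuRM; apply: RM_to_uRM.
  split; last by rewrite wt_phi.
  have w' : wt (Phi (RM1vec 0 d)) = (2 ^ m.-1)%N by rewrite wt_phi.
  apply/eqP => h0; move: w'; rewrite h0.
  rewrite /wt (_ : [set p | _] = set0) ?cards0.
    by move=> /esym/eqP; rewrite expn_eq0.
  by apply/setP => p; rewrite !inE ffunE eqxx.
- move=> x /inuRM; rewrite -{1}(PP x) => /iff1 [c0 [c hc]] xn0.
  rewrite -(PP x) wt_phi hc.
  case: (eqVneq c 0) => [ec|cn0]; last by rewrite wt_RM1.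
  rewrite ec RMc0; case: eqP => [e0|_]; last by rewrite leq_exp2l // leq_pred.
  case/eqP: xn0; rewrite -(PP x) hc e0 ec; apply/ffunP => p.
  by rewrite !ffunE big1 ?addr0 // => k _; rewrite mxE mul0r.
Qed.
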